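(* There is an absolute constant $C$ such that the following holds. Let $(\mathcal T,\{B_i\})$ be a tree decomposition of a graph $G$, rooted at $r$, such that every node has level at most $d$, and let $\lambda\in\{1,\dots,d\}$. Define new bags $B'_v := \bigcup_{w\in \mathcal T_{v\leftrightarrow\sigma(v)}} B_w$ for $v\neq r$ and $B'_r:=B_r$. Then $(\mathcal T,\{B'_v\})$ has combinatorial diameter at most $C\cdot d/\lambda$.
   Context: Tree decomposition: tree with bags covering vertices and edges of $G$, each vertex's bags forming a connected subtree. $\mathcal T_{x\leftrightarrow y}$ is the set of nodes on the unique $x$–$y$ path in $\mathcal T$. The level $\ell(v)$ of a node is the number of edges on $\mathcal T_{v\leftrightarrow r}$. A node is a synchronization node if its level is a multiple of $\lambda$. For $v\neq r$, the synchronization ancestor $\sigma(v)$ is the first synchronization node on the path from $v$ to $r$, excluding $v$ itself. Combinatorial diameter: for nodes $s,t$ consider the path $\mathcal T_{s\leftrightarrow t}$. A non-endpoint node $v$ of the current path, with its two neighbours on the current path labelled $u,w$ (in some order), is redundant if $B_v\cap B_w\subseteq B_u$; bypassing $v$ deletes $v$ and joins $u,w$. The path has combinatorial length at most $\ell$ if repeatedly bypassing redundant nodes (redundancy evaluated in the current path) yields a path with at most $\ell$ edges. The combinatorial diameter is the minimum $\delta$ such that every path $\mathcal T_{u\leftrightarrow v}$ has combinatorial length at most $\delta$ (with respect to the given bags). *)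

(* Defs.v *)
From mathcomp Require Import all_boot.
From Stdlib Require Import Relations.
Set Implicit Arguments. Unset Strict Implicit. Unset Printing Implicit Defensive.

(* Rooted trees are given by a parent function [par : N -> N] on a finite
   node type [N] with root [r]:  par r = r  and every node reaches r. *)
Definition rooted_tree (N : finType) (par : N -> N) (r : N) : Prop :=
  par r = r /\ forall v : N, r \in traject par v #|N|.

Definition tadj (N : finType) (par : N -> N) : rel N :=
  fun u w => (u != w) && ((par u == w) || (par w == u)).

(* [p] is the node sequence of the (unique) path T_{s<->t} *)
Definition tree_path (N : finType) (par : N -> N) (s t : N) (p : seq N) : Prop :=
  exists p', [/\ p = s :: p', path (tadj par) s p', last s p' = t & uniq p].

(* ancestors of v: v, par v, par (par v), ... (r repeated at the end) *)
Definition anc (N : finType) (par : N -> N) (v : N) : seq N :=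
  traject par v #|N|.

Definition level (N : finType) (par : N -> N) (r : N) (v : N) : nat :=
  index r (anc par v).

(* index (in anc v) of the synchronization ancestor sigma(v): the first node
   after v on the path to r whose level is a multiple of lambda *)
Definition sigma_idx (N : finType) (par : N -> N) (r : N) (lam : nat) (v : N) : nat :=
  (find (fun w => lam %| level par r w) (behead (anc par v))).+1.

Definition sync_anc (N : finType) (par : N -> N) (r : N) (lam : nat) (v : N) : N :=
  nth v (anc par v) (sigma_idx par r lam v).

(* the nodes of T_{v <-> sigma(v)} *)
Definition sigma_path (N : finType) (par : N -> N) (r : N) (lam : nat) (v : N) : seq N :=
  take (sigma_idx par r lam v).+1 (anc par v).

Definition new_bags (N V : finType) (par : N -> N) (r : N) (lam : nat)
    (B : N -> {set V}) (v : N) : {set V} :=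
  if v == r then B r else \bigcup_(w <- sigma_path par r lam v) B w.

Definition tree_decomposition (N V : finType) (par : N -> N) (gadj : rel V)
    (B : N -> {set V}) : Prop :=
  [/\ forall x : V, exists i : N, x \in B i,
      forall x y : V, gadj x y -> exists i : N, (x \in B i) && (y \in B i)
    & forall x : V, forall u w : N, x \in B u -> x \in B w ->
        connect [rel a b | tadj par a b && (x \in B a) && (x \in B b)] u w].

Inductive bypass (N V : finType) (B : N -> {set V}) : seq N -> seq N -> Prop :=
  | Bypass (a b : seq N) (u v w : N) :
      (B v :&: B w \subset B u) || (B v :&: B u \subset B w) ->
      bypass B (a ++ [:: u; v; w] ++ b) (a ++ [:: u; w] ++ b).

Definition bypass_star (N V : finType) (B : N -> {set V}) : seq N -> seq N -> Prop :=
  clos_refl_trans (seq N) (@bypass N V B).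

Definition comb_length_le (N V : finType) (B : N -> {set V}) (p : seq N) (l : nat) : Prop :=
  exists q, clos_refl_trans (seq N) (@bypass N V B) p q /\ (size q).-1 <= l.

Definition comb_diam_le (N V : finType) (par : N -> N) (B : N -> {set V}) (delta : nat) : Prop :=
  forall s t p, tree_path par s t p -> comb_length_le B p delta.

(* Main.v *)
Require Import Defs.
From mathcomp Require Import all_boot.
From Stdlib Require Import Relations.
From mathcomp Require Import zify.
Set Implicit Arguments. Unset Strict Implicit. Unset Printing Implicit Defensive.

Section Red.
Variables (N V : finType) (Bs : N -> {set V}) (keep : pred N).

Lemma reduce_up (m : seq N) : forall x pre z suf,
  path (fun u v => keep v || (Bs v \subset Bs u)) x m ->
  clos_refl_trans _ (@bypass N V Bs) (pre ++ x :: m ++ z :: suf)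
     (pre ++ x :: filter keep m ++ z :: suf).
Proof.
elim: m => [|v m IH] x pre z suf /=; first by move=> _; apply: rt_refl.
move=> /andP[Hxv Hp]; case Kv: (keep v).
  have := IH v (rcons pre x) z suf Hp; by rewrite !cat_rcons.
move: Hxv; rewrite Kv /= => Hxv.
apply: (@rt_trans _ _ _ (pre ++ x :: m ++ z :: suf)).
  apply: rt_step.
  case: m Hp {IH} => [|w m'] Hp /=.
    have := @Bypass N V Bs pre suf x v z.
    by rewrite /= (subset_trans (subsetIl _ _) Hxv); apply.
  have := @Bypass N V Bs pre (m' ++ z :: suf) x v w.
  by rewrite /= (subset_trans (subsetIl _ _) Hxv); apply.
apply: IH; case: m Hp => [|w m'] //= /andP[Hvw ->]; rewrite andbT.
case: (keep w) Hvw => //= Hwv; exact: subset_trans Hwv Hxv.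
Qed.

Lemma bypass_rev p q : bypass Bs p q -> bypass Bs (rev p) (rev q).
Proof.
case=> a b u v w H; rewrite !rev_cat /=.
have := @Bypass N V Bs (rev b) (rev a) w v u; rewrite orbC => /(_ H).
by rewrite /= !rev_cons -!cats1 -!catA.
Qed.

Lemma star_rev p q : clos_refl_trans _ (@bypass N V Bs) p q ->
  clos_refl_trans _ (@bypass N V Bs) (rev p) (rev q).
Proof.
elim=> [x y /bypass_rev|x|x y z _ H1 _ H2]; [exact: rt_step|exact: rt_refl|].
exact: rt_trans H1 H2.
Qed.

Lemma reduce_down (m : seq N) x pre z suf :
  path (fun u v => keep v || (Bs v \subset Bs u)) z (rev m) ->
  clos_refl_trans _ (@bypass N V Bs) (pre ++ x :: m ++ z :: suf)
     (pre ++ x :: filter keep m ++ z :: suf).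
Proof.
move=> /(reduce_up (rev suf) x (rev pre)) /star_rev.
rewrite !rev_cat !rev_cons revK !rev_cat !rev_cons revK filter_rev revK.
by rewrite revK !cat_rcons -!catA.
Qed.
End Red.

Lemma index_char (T : eqType) (s : seq T) x i x0 : i < size s -> nth x0 s i = x ->
  (forall j, j < i -> nth x0 s j != x) -> index x s = i.
Proof.
move=> Hi Hn Hb; have Hx : x \in s by rewrite -Hn mem_nth.
case: (ltngtP (index x s) i) => // H.
  by have := Hb _ H; rewrite nth_index // eqxx.
by have := before_find x0 H; rewrite Hn /= eqxx.
Qed.

Lemma find_le (T : Type) (a : pred T) s i x0 : a (nth x0 s i) -> find a s <= i.
Proof. by move=> H; rewrite leqNgt; apply/negP => /(before_find x0); rewrite H. Qed.

Section Tree.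
Variables (N : finType) (par : N -> N) (r : N).
Hypothesis rt : rooted_tree par r.

Lemma lev_facts v : [/\ level par r v < #|N|, iter (level par r v) par v = r &
   forall i, i < level par r v -> iter i par v != r].
Proof.
case: rt => _ H; have Hr := H v; rewrite /level /anc.
have Hs : index r (traject par v #|N|) < #|N| by rewrite -{2}(size_traject par v #|N|) index_mem.
split=> //.
  by rewrite -(nth_traject par Hs v) nth_index.
move=> i Hi; have := before_find v Hi; rewrite nth_traject ?(ltn_trans Hi) //= => ->.
by [].
Qed.

Lemma level_char w i : i < #|N| -> iter i par w = r ->
  (forall j, j < i -> iter j par w != r) -> level par r w = i.
Proof.
move=> Hi He Hb; rewrite /level /anc; apply: (index_char (x0 := w)).
- by rewrite size_traject.
- by rewrite nth_traject.
- by move=> j Hj; rewrite nth_traject ?(ltn_trans Hj) // Hb.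
Qed.

Lemma level_r : level par r r = 0.
Proof.
case: (lev_facts r) => _ _ H; case E: (level par r r) => [|k] //.
by have := H 0; rewrite E eqxx => /(_ isT).
Qed.

Lemma level_iter v j : j <= level par r v -> level par r (iter j par v) = level par r v - j.
Proof.
case: (lev_facts v) => H1 H2 H3 Hj; apply: level_char.
- by apply: leq_ltn_trans H1; rewrite leq_subr.
- by rewrite -iterD subnK.
- move=> i Hi; rewrite -iterD; apply: H3; lia.
Qed.

Lemma uniq_bound s k : uniq (traject par s k.+1) -> k <= level par r s.
Proof.
move=> U; rewrite leqNgt; apply/negP => Hk.
case: (lev_facts s) => _ H2 _.
have A1 : level par r s < k.+1 by apply: ltnW.
have A2 : (level par r s).+1 < k.+1 by [].
have := nth_uniq s (i := level par r s) (j := (level par r s).+1) _ _ U.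
rewrite size_traject !nth_traject // iterS H2.
by case: rt => -> _; rewrite eqxx => /(_ A1 A2) /esym /eqP /n_Sn.
Qed.

Variables (lam : nat).
Definition sync w := lam %| level par r w.

Lemma sigma_facts v : v != r ->
  let m := sigma_idx par r lam v in
  [/\ 0 < m <= level par r v, sync (iter m par v),
      forall j, 0 < j < m -> ~~ sync (iter j par v) &
      forall w, (w \in sigma_path par r lam v) = [exists j : 'I_m.+1, w == iter j par v]].
Proof.
move=> vr m.
case: (lev_facts v) => H1 H2 H3.
have L0 : 0 < level par r v.
  by rewrite lt0n; apply/negP => /eqP E; move: H2; rewrite E /= => /eqP; rewrite (negbTE vr).
move: H1; case E: #|N| => [|n] // H1.
have Hanc : behead (anc par v) = traject par (par v) n by rewrite /anc E.
have Hn : nth (par v) (traject par (par v) n) (level par r v).-1 = r.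
  by rewrite nth_traject -?iterSr ?prednK // -ltnS prednK.
have Hf : find (fun w => lam %| level par r w) (traject par (par v) n) <= (level par r v).-1.
  by apply: (find_le (x0 := par v)); rewrite Hn level_r dvdn0.
have Hm : m = (find (fun w => lam %| level par r w) (traject par (par v) n)).+1.
  by rewrite /m /sigma_idx Hanc.
have Hlt : find (fun w => lam %| level par r w) (traject par (par v) n) < n.
  by apply: leq_ltn_trans Hf _; rewrite -ltnS prednK.
split.
- by rewrite Hm /= -(prednK L0) ltnS.
- have := nth_find (par v) (a := fun w => lam %| level par r w) (s := traject par (par v) n).
  rewrite has_find size_traject => /(_ Hlt).
  by rewrite nth_traject // -iterSr -Hm.
- move=> j /andP[j0 jm].
  have := before_find (par v) (a := fun w => lam %| level par r w) (s := traject par (par v) n) (i := j.-1).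
  rewrite -ltnS prednK // -Hm => /(_ jm).
  have jn : j.-1 < n by apply: ltn_trans Hlt; rewrite -ltnS prednK // -Hm.
  by rewrite nth_traject // -iterSr prednK // /sync => ->.
- move=> w; rewrite /sigma_path -/m /anc take_traject; last by rewrite Hm E ltnS.
  apply/trajectP/existsP => [[i Hi ->]|[i /eqP ->]].
    by exists (Ordinal Hi).
  by exists i.
Qed.

Lemma incl (V : finType) (B : N -> {set V}) u :
  sync (par u) || (new_bags par r lam B (par u) \subset new_bags par r lam B u).
Proof.
case S: (sync (par u)) => //=.
have vr : par u != r by apply/negP => /eqP E; move: S; rewrite E /sync level_r dvdn0.
have ur : u != r by apply/negP => /eqP E; move: vr; rewrite E; case: rt => -> _; rewrite eqxx.
rewrite /new_bags (negbTE vr) (negbTE ur) !bigcup_seq.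
case: (sigma_facts vr) => /andP[mv0 _] _ Hcv Mv.
case: (sigma_facts ur) => /andP[mu0 _] Hsu _ Mu.
set mv := sigma_idx par r lam (par u) in mv0 Hcv Mv.
set mu := sigma_idx par r lam u in mu0 Hsu Mu.
have mu1 : 1 < mu.
  by move: mu0 Hsu; case: (mu) => [|[|k]] //; rewrite /= S.
have Hle : mv < mu.
  rewrite ltnNge; apply/negP => H.
  have := Hcv mu.-1; rewrite -iterSr prednK ?(ltnW mu1) // Hsu.
  have -> : 0 < mu.-1 < mv by apply/andP; split; lia.
  by move=> /(_ isT).
apply/subsetP => x /bigcupP[w]; rewrite Mv => /existsP[j /eqP ->] Hx.
apply/bigcupP; exists (iter j.+1 par u); last by rewrite iterSr.
rewrite Mu; apply/existsP.
have jm : j.+1 < mu.+1 by rewrite ltnS; apply: leq_ltn_trans Hle; rewrite -ltnS.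
by exists (Ordinal jm).
Qed.

Lemma path_struct (p' : seq N) : forall x, path (tadj par) x p' -> uniq (x :: p') ->
  exists k l t', x :: p' = traject par x k ++ iter k par x :: rev (traject par t' l)
     /\ iter l par t' = iter k par x.
Proof.
elim: p' => [|y p'' IH] x /=.
  by move=> _ _; exists 0, 0, x.
move=> /andP[Hxy Hp] /andP[xn U].
have [k' [l' [t' [E1 E2]]]] := IH y Hp U.
case/andP: Hxy => xy /orP[/eqP Pxy|/eqP Pyx].
  exists k'.+1, l', t'; rewrite iterSr Pxy E2; split=> //.
  by rewrite [traject _ _ _]/= Pxy -E2 cat_cons E2 -E1.
case: k' E1 E2 => [|k''] E1 E2.
  move: E1 E2 => /= [E1] E2.
  exists 0, l'.+1, t'; rewrite trajectSr rev_rcons E2 /= -E1; split=> //.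
  by rewrite E2.
exfalso; move: xn; rewrite E1 /= inE negb_or => /andP[_]; case: k'' E1 E2 => [|k3] E1 E2 /=.
  by rewrite inE -Pyx eqxx.
by rewrite inE -Pyx eqxx.
Qed.

Lemma traject_map (x : N) a n : traject par (iter a par x) n = map (fun j => iter j par x) (iota a n).
Proof. by elim: n a => [|n IH] a //=; rewrite -iterS IH. Qed.

Lemma path_gap (l : nat) (s : seq nat) x : path (fun i j => i + l <= j) x s -> size s * l + x <= last x s.
Proof.
elim: s x => [|y s IH] x //= /andP[H1 H2]; have := IH _ H2; rewrite mulSn; lia.
Qed.

Lemma count_gap (P : pred nat) a n : 0 < lam ->
  (forall i j, a <= i -> i < j -> j < a + n -> P i -> P j -> i + lam <= j) ->
  count P (iota a n) * lam <= n + lam.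
Proof.
move=> l0 Hg; rewrite -size_filter.
have So : sorted (fun i j => i + lam <= j) (filter P (iota a n)).
  apply: (@sub_in_sorted _ (fun i => (a <= i < a + n) && P i) ltn).
  - move=> i j /andP[/andP[H1 H2] H3] /andP[/andP[H4 H5] H6] Hij; exact: Hg.
  - by apply/allP => i; rewrite mem_filter mem_iota => /andP[-> ->].
  - exact: (sorted_filter ltn_trans P (iota_ltn_sorted a n)).
case E: (filter P (iota a n)) So => [|y s] //= Hs.
have := path_gap Hs.
have : y \in filter P (iota a n) by rewrite E inE eqxx.
have : last y s \in filter P (iota a n) by rewrite E mem_last.
rewrite !mem_filter !mem_iota mulSn; lia.
Qed.

Lemma count_chain s k : k.+1 <= level par r s -> 0 < lam ->
  count sync (traject par (par s) k) * lam <= k + lam.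
Proof.
move=> Hk l0; rewrite (traject_map s 1 k) count_map.
apply: count_gap => // i j H1 H2 H3; rewrite /preim /sync /= !level_iter; try lia.
move=> Di Dj; have := dvdn_sub Di Dj.
have -> : level par r s - i - (level par r s - j) = j - i by lia.
move/(dvdn_leq); rewrite subn_gt0 => /(_ H2); lia.
Qed.
End Tree.

Lemma up_part (N V : finType) (par : N -> N) (r : N) (rt : rooted_tree par r) lam
  (B : N -> {set V}) s k z suf : k <= level par r s -> 0 < lam ->
  exists U, clos_refl_trans _ (@bypass N V (new_bags par r lam B))
     (traject par s k ++ z :: suf) (U ++ z :: suf) /\ size U * lam <= k + 2 * lam.
Proof.
move=> Hk l0; case: k Hk => [|k] Hk.
  by exists [::]; split=> //; apply: rt_refl.
exists (s :: filter (sync par r lam) (traject par (par s) k)); split.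
  have := @reduce_up N V (new_bags par r lam B) (sync par r lam)
     (traject par (par s) k) s [::] z suf; apply.
  apply: (sub_path _ (fpath_traject par s k)) => u v /eqP <-; exact: incl.
rewrite /= size_filter mulSn; have := count_chain rt Hk l0; lia.
Qed.

Lemma down_part (N V : finType) (par : N -> N) (r : N) (rt : rooted_tree par r) lam
  (B : N -> {set V}) t l z pre : l <= level par r t -> 0 < lam ->
  exists D, clos_refl_trans _ (@bypass N V (new_bags par r lam B))
     (pre ++ z :: rev (traject par t l)) (pre ++ z :: D) /\ size D * lam <= l + 2 * lam.
Proof.
move=> Hk l0; case: l Hk => [|l] Hk.
  by exists [::]; split=> //; apply: rt_refl.
exists (filter (sync par r lam) (rev (traject par (par t) l)) ++ [:: t]); split.
  rewrite [traject _ _ _]/= rev_cons -cats1.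
  have := @reduce_down N V (new_bags par r lam B) (sync par r lam)
     (rev (traject par (par t) l)) z pre t [::]; apply.
  rewrite revK; apply: (sub_path _ (fpath_traject par t l)) => u v /eqP <-; exact: incl.
rewrite size_cat /= size_filter count_rev addn1 mulSn; have := count_chain rt Hk l0; lia.
Qed.

(* "combinatorial diameter at most C * d / lambda" is expressed, for each
   path, as  (combinatorial length) * lambda <= C * d. *)
Theorem lemma4p1 :
  exists C : nat,
  forall (V N : finType) (gadj : rel V) (par : N -> N) (r : N)
         (B : N -> {set V}) (d lam : nat),
    rooted_tree par r ->
    tree_decomposition par gadj B ->
    (forall v : N, level par r v <= d) ->
    0 < lam <= d ->
    forall (s t : N) (p : seq N), tree_path par s t p ->
      exists q, bypass_star (new_bags par r lam B) p q
                /\ (size q).-1 * lam <= C * d.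
Proof.
exists 6 => V N gadj par r B d lam rt _ Hd /andP[l0 ld] s t p [p' [-> Hp _ U]].
have [k [l [t' [E1 E2]]]] := path_struct Hp U.
rewrite E1 in U *.
have Hk : k <= level par r s.
  apply: (uniq_bound rt); move: U; rewrite trajectSr -cat_rcons cat_uniq.
  by case/andP.
have Hl : l <= level par r t'.
  have R : iter k par s :: rev (traject par t' l) = rev (traject par t' l.+1).
    by rewrite trajectSr rev_rcons E2.
  apply: (uniq_bound rt); move: U; rewrite R cat_uniq rev_uniq.
  by case/and3P.
have [Uq [HU SU]] := up_part rt B (iter k par s) (rev (traject par t' l)) Hk l0.
have [Dq [HD SD]] := down_part (lam := lam) rt B (iter k par s) Uq Hl l0.
exists (Uq ++ iter k par s :: Dq); split.
  exact: rt_trans HU HD.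
rewrite size_cat /= addnS /= mulnDl.
have := Hd s; have := Hd t'; lia.
Qed.
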